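(* Let $f:\{0,1\}^n\to\{0,1\}$. Each of the following quantities is at most $s_0(f)s_1(f)$, and $s_0(f)s_1(f)\le s(f)^2$: (i) (Khrapchenko bound) $\frac{|C|^2}{|A||B|}$ for any nonempty $A\subseteq f^{-1}(0)$, $B\subseteq f^{-1}(1)$, where $C=\{(x,y)\in A\times B: d_H(x,y)=1\}$; (ii) (Koutsoupias bound) $\|Q\|_2^2$ for any such $A,B,C$, where $Q$ is the $A\times B$ $0/1$ matrix with $Q[x,y]=1$ iff $(x,y)\in C$; (iii) (H\aa stad bound) $\frac{\Pr[\mathcal{C}\mid\Delta]^2}{\Pr[\mathcal{A}\mid\Delta]\Pr[\mathcal{B}\mid\Delta]}\left(\frac{1-p}{2p}\right)^2$ for any $p\in(0,1)$ and any filter $\Delta$ with $\Pr[\mathcal{A}\mid\Delta],\Pr[\mathcal{B}\mid\Delta]>0$.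
   Context: For an input $x$, the sensitivity of $f$ on $x$ is the number of $i\in[n]$ such that flipping $x_i$ changes $f$. $s_0(f)$ (resp. $s_1(f)$) is the maximum sensitivity over $x\in f^{-1}(0)$ (resp. $f^{-1}(1)$), and $s(f)=\max(s_0(f),s_1(f))$. $d_H$ is Hamming distance, $\|\cdot\|_2$ the spectral norm. A restriction is a string $\rho\in\{0,1,\star\}^n$; $f|_\rho$ is the function of the $\star$-variables obtained by fixing the other variables as in $\rho$. $R_p$ is the distribution on restrictions setting each variable independently to $\star$ with probability $p$ and to $0$, $1$ each with probability $(1-p)/2$. A filter $\Delta$ is a set of restrictions such that if $\rho\in\Delta$ then every restriction obtained from $\rho$ by fixing one $\star$ to a constant is in $\Delta$. For an event $E$, $\Pr[E\mid\Delta]=\Pr_{\rho\sim R_p}[E\mid\rho\in\Delta]$. $\mathcal{A}$ is the event that $f|_\rho$ is the constant $0$, $\mathcal{B}$ the event that $f|_\rho$ is the constant $1$, and $\mathcal{C}$ the event that $f|_\rho$ is a single literal ($x_i$ or $\neg x_i$ for some free variable $x_i$). *)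

(* Defs.v *)
From HB Require Import structures.
From mathcomp Require Import all_boot all_order all_algebra.
From mathcomp Require Import classical_sets reals.
Set Implicit Arguments. Unset Strict Implicit. Unset Printing Implicit Defensive.
Import Order.TTheory GRing.Theory Num.Theory.

(* Points of the Boolean cube {0,1}^n; false = 0, true = 1. *)
Definition cube (n : nat) := {ffun 'I_n -> bool}.

Definition flip n (x : cube n) (i : 'I_n) : cube n :=
  [ffun j => if j == i then ~~ x j else x j].

Definition dH n (x y : cube n) : nat := #|[set i | x i != y i]|.

Definition sens n (f : cube n -> bool) (x : cube n) : nat :=
  #|[set i | f (flip x i) != f x]|.

(* s_0(f), s_1(f), s(f) (max over an empty set is 0) *)
Definition s0 n (f : cube n -> bool) : nat := \max_(x : cube n | ~~ f x) sens f x.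
Definition s1 n (f : cube n -> bool) : nat := \max_(x : cube n | f x) sens f x.
Definition sensitivity n (f : cube n -> bool) : nat := maxn (s0 f) (s1 f).

Local Open Scope ring_scope.

Definition khr_C n (A B : {set cube n}) : {set cube n * cube n} :=
  [set xy | (xy.1 \in A) && (xy.2 \in B) && (dH xy.1 xy.2 == 1%N)].

Definition koutsoupias_Q (R : nzRingType) n (A B : {set cube n})
  : 'M[R]_(#|A|, #|B|) :=
  \matrix_(i, j) (if (enum_val i, enum_val j) \in khr_C A B then 1 else 0).

Definition norm2 (R : rcfType) m (v : 'cV[R]_m) : R :=
  Num.sqrt (\sum_i (v i 0) ^+ 2).

Definition spectral_norm (R : realType) m k (M : 'M[R]_(m, k)) : R :=
  sup [set norm2 (M *m v) | v in [set v : 'cV[R]_k | norm2 v = 1]]%classic.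

(* Restrictions: None = star, Some b = fixed to b *)
Definition restriction n := {ffun 'I_n -> option bool}.

Definition extends n (rho : restriction n) (x : cube n) : bool :=
  [forall i, if rho i is Some b then x i == b else true].

Definition Rp (R : fieldType) (p : R) n (rho : restriction n) : R :=
  \prod_i (if rho i is Some _ then (1 - p) / 2 else p).

Definition is_filter n (D : {set restriction n}) : Prop :=
  forall rho, rho \in D -> forall (i : 'I_n) (b : bool), rho i = None ->
    [ffun j => if j == i then Some b else rho j] \in D.

Definition condPr (R : fieldType) (p : R) n (E : pred (restriction n))
    (D : {set restriction n}) : R :=
  (\sum_(rho in D | E rho) Rp p rho) / (\sum_(rho in D) Rp p rho).

Definition evA n (f : cube n -> bool) : pred (restriction n) :=
  fun rho => [forall x, extends rho x ==> ~~ f x].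
Definition evB n (f : cube n -> bool) : pred (restriction n) :=
  fun rho => [forall x, extends rho x ==> f x].
Definition evC n (f : cube n -> bool) : pred (restriction n) :=
  fun rho => [exists i, (rho i == None) &&
    ([forall x, extends rho x ==> (f x == x i)] ||
     [forall x, extends rho x ==> (f x == ~~ x i)])].

(* Main.v *)
Require Import Defs.
From HB Require Import structures.
From mathcomp Require Import all_boot all_order all_algebra.
From mathcomp Require Import reals ring lra.
From mathcomp Require boolp classical_sets.
Import Order.TTheory GRing.Theory Num.Theory.
Set Implicit Arguments. Unset Strict Implicit. Unset Printing Implicit Defensive.

Section Cube.
Variable n : nat.
Implicit Types (x y : cube n) (f : cube n -> bool).

Lemma dH_sym x y : dH x y = dH y x.
Proof. by rewrite /dH; apply: eq_card => i; rewrite !inE eq_sym. Qed.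

Lemma dH1_flip x y : dH x y = 1%N -> exists i, y = flip x i.
Proof.
rewrite /dH => /eqP/cards1P [i Hi]; exists i; apply/ffunP => j; rewrite ffunE.
have := congr1 (fun S : {set 'I_n} => j \in S) Hi; rewrite !inE.
case: (eqVneq j i) => [->|ne] /=; rewrite ?eqxx.
  by case: (x i) (y i) => [] [].
by case: (x j) (y j) => [] [].
Qed.

Lemma nbr_bound f x (B : {set cube n}) :
  {in B, forall y, f y != f x} -> #|[set y in B | dH x y == 1%N]| <= sens f x.
Proof.
move=> HB; rewrite /sens.
apply: leq_trans (leq_imset_card (flip x) _).
apply: subset_leq_card; apply/fintype.subsetP => y; rewrite !inE => /andP [yB /eqP d1].
have [i Ei] := dH1_flip d1; apply/imsetP; exists i => //.
by rewrite inE -Ei; apply: HB.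
Qed.

Lemma sens_s0 f x : ~~ f x -> sens f x <= s0 f.
Proof. by move=> h; apply: (leq_bigmax_cond (P := fun x => ~~ f x)). Qed.
Lemma sens_s1 f x : f x -> sens f x <= s1 f.
Proof. by move=> h; apply: (leq_bigmax_cond (P := fun x => f x)). Qed.

Local Open Scope ring_scope.
Variable R : realFieldType.

Section AB.
Variables (f : cube n -> bool) (A B : {set cube n}).
Hypothesis HA : {in A, forall x, f x = false}.
Hypothesis HB : {in B, forall y, f y = true}.

Definition ind x y : R := if (x, y) \in khr_C A B then 1 else 0.

Lemma ind_ge0 x y : 0 <= ind x y.
Proof. by rewrite /ind; case: ifP. Qed.

Lemma rowsum x : x \in A -> \sum_(y in B) ind x y <= (s0 f)%:R.
Proof.
move=> xA.
have -> : \sum_(y in B) ind x y = \sum_(y in [set y in B | dH x y == 1%N]) 1.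
  rewrite big_mkcond [RHS]big_mkcond; apply: eq_bigr => y _.
  by rewrite /ind !inE /= xA; case: (y \in B).
rewrite sumr_const ler_nat; apply: leq_trans (sens_s0 (f := f) (x := x) _); last by rewrite HA.
by apply: nbr_bound => y yB; rewrite (HA xA) (HB yB).
Qed.

Lemma colsum y : y \in B -> \sum_(x in A) ind x y <= (s1 f)%:R.
Proof.
move=> yB.
have -> : \sum_(x in A) ind x y = \sum_(x in [set x in A | dH y x == 1%N]) 1.
  rewrite big_mkcond [RHS]big_mkcond; apply: eq_bigr => x _.
  by rewrite /ind !inE /= yB dH_sym andbT; case: (x \in A).
rewrite sumr_const ler_nat; apply: leq_trans (sens_s1 (f := f) (x := y) _); last by rewrite HB.
by apply: nbr_bound => x xA; rewrite (HA xA) (HB yB).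
Qed.

Lemma cardC : (#|khr_C A B|)%:R = \sum_(x in A) \sum_(y in B) ind x y.
Proof.
rewrite -sumr_const big_mkcond /=.
rewrite (eq_bigr (fun p => ind p.1 p.2)); last first.
  by move=> [a b] _; rewrite /ind.
rewrite -(pair_big xpredT xpredT (fun a b => ind a b)) /=.
rewrite [RHS]big_mkcond; apply: eq_bigr => x _.
case xA: (x \in A).
  rewrite [RHS]big_mkcond; apply: eq_bigr => y _; rewrite /ind; case yB: (y \in B) => //.
  by rewrite inE /= yB andbF.
rewrite big1 // => y _; rewrite /ind inE /= xA.
by case: (y \in B).
Qed.

Lemma khr_bound1 : (#|khr_C A B|)%:R <= (s0 f)%:R * (#|A|)%:R :> R.
Proof.
rewrite cardC -sumr_const mulr_sumr; apply: ler_sum => x xA.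
by rewrite mulr1; apply: rowsum.
Qed.

Lemma khr_bound2 : (#|khr_C A B|)%:R <= (s1 f)%:R * (#|B|)%:R :> R.
Proof.
rewrite cardC exchange_big /= -sumr_const mulr_sumr; apply: ler_sum => y yB.
by rewrite mulr1; apply: colsum.
Qed.
End AB.
End Cube.
Local Open Scope ring_scope.
Lemma wCS (R : realFieldType) (I : finType) (w v : I -> R) :
  (forall i, 0 <= w i) ->
  (\sum_i w i * v i) ^+ 2 <= (\sum_i w i) * (\sum_i w i * v i ^+ 2).
Proof.
move=> w0.
have E1 : (\sum_i w i * v i) ^+ 2 = \sum_i \sum_j (w i * w j) * (v i * v j).
  rewrite expr2 mulr_suml; apply: eq_bigr => i _; rewrite mulr_sumr.
  by apply: eq_bigr => j _; rewrite mulrACA.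
have E2 : (\sum_i w i) * (\sum_i w i * v i ^+ 2) = \sum_i \sum_j (w i * w j) * (v j ^+ 2).
  rewrite mulr_suml; apply: eq_bigr => i _; rewrite mulr_sumr.
  by apply: eq_bigr => j _; ring.
have E3 : (\sum_i w i) * (\sum_i w i * v i ^+ 2) = \sum_i \sum_j (w i * w j) * (v i ^+ 2).
  rewrite mulrC mulr_suml; apply: eq_bigr => i _; rewrite mulr_sumr.
  by apply: eq_bigr => j _; ring.
suff H : 2 * (\sum_i \sum_j (w i * w j) * (v i * v j)) <=
   \sum_i \sum_j (w i * w j) * (v j ^+ 2) + \sum_i \sum_j (w i * w j) * (v i ^+ 2).
  by rewrite E1; rewrite -E2 -E3 in H; lra.
rewrite -big_split /= mulr_sumr.
apply: ler_sum => i _; rewrite mulr_sumr -big_split /=; apply: ler_sum => j _.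
rewrite -mulrDr mulrCA; apply: ler_wpM2l; first by rewrite mulr_ge0.
rewrite -subr_ge0.
have -> : v j ^+ 2 + v i ^+ 2 - 2 * (v i * v j) = (v i - v j) ^+ 2 by ring.
exact: sqr_ge0.
Qed.

Lemma Qbound (R : realType) n (f : cube n -> bool) (A B : {set cube n}) :
  {in A, forall x, f x = false} -> {in B, forall y, f y = true} ->
  forall v : 'cV[R]_#|B|, \sum_j v j 0 ^+ 2 = 1 ->
  \sum_i ((koutsoupias_Q R A B *m v) i 0) ^+ 2 <= (s0 f * s1 f)%:R.
Proof.
move=> HA HB v hv.
have wE i j : koutsoupias_Q R A B i j = ind R A B (enum_val i) (enum_val j) by rewrite mxE.
have w0 i j : 0 <= koutsoupias_Q R A B i j by rewrite wE ind_ge0.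
have row i : \sum_j koutsoupias_Q R A B i j <= (s0 f)%:R.
  under eq_bigr do rewrite wE.
  rewrite -(big_enum_val (fun y => ind R A B (enum_val i) y)) /=.
  exact: (@rowsum n R f A B HA HB _ (enum_valP i)).
have col j : \sum_i koutsoupias_Q R A B i j <= (s1 f)%:R.
  under eq_bigr do rewrite wE.
  rewrite -(big_enum_val (fun x => ind R A B x (enum_val j))) /=.
  exact: (@colsum n R f A B HA HB _ (enum_valP j)).
apply: le_trans (_ : \sum_i (s0 f)%:R * (\sum_j koutsoupias_Q R A B i j * v j 0 ^+ 2) <= _).
  apply: ler_sum => i _; rewrite mxE.
  apply: le_trans (@wCS _ _ (fun j => koutsoupias_Q R A B i j) (fun j => v j 0) (w0 i)) _.
  apply: ler_wpM2r; last exact: row.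
  by apply: sumr_ge0 => j _; rewrite mulr_ge0 // sqr_ge0.
rewrite -mulr_sumr natrM; apply: ler_wpM2l; first by rewrite ler0n.
rewrite exchange_big /=.
apply: le_trans (_ : \sum_j (s1 f)%:R * v j 0 ^+ 2 <= _).
  apply: ler_sum => j _; rewrite -mulr_suml; apply: ler_wpM2r; first exact: sqr_ge0.
  exact: col.
by rewrite -mulr_sumr hv mulr1.
Qed.

Module Spec.
Import boolp classical_sets.
Local Open Scope classical_set_scope.
Lemma spec_bound (R : realType) n (f : cube n -> bool) (A B : {set cube n}) :
  {in A, forall x, f x = false} -> {in B, forall y, f y = true} ->
  spectral_norm (koutsoupias_Q R A B) ^+ 2 <= (s0 f * s1 f)%:R.
Proof.
move=> HA HB; rewrite /spectral_norm.
set S := [set _ | _ in _].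
set c : R := (s0 f * s1 f)%:R.
have c0 : 0 <= c by rewrite ler0n.
have ub : ubound S (Num.sqrt c).
  move=> y [v /= hv <-]; rewrite /norm2 ler_sqrt //.
  apply: (Qbound HA HB).
  have s0 : 0 <= \sum_j v j 0 ^+ 2 by apply: sumr_ge0 => j _; exact: sqr_ge0.
  by rewrite -(sqr_sqrtr s0); move: hv; rewrite /norm2 => ->; rewrite expr1n.
have [ne|emp] := pselect (S !=set0).
  have h0 : 0 <= sup S.
    case: (ne) => y Sy; apply: le_trans (sup_upper_bound _ Sy).
      by case: Sy => v _ <-; exact: sqrtr_ge0.
    by split => //; exists (Num.sqrt c).
  have hle := ge_sup ne ub.
  by have := ler_pM h0 h0 hle hle; rewrite -!expr2 sqr_sqrtr.
rewrite (_ : S = set0) ?sup0 ?expr2 ?mul0r //.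
apply/seteqP; split=> y Sy //; exfalso; apply: emp; by exists y.
Qed.
End Spec.
Import Spec.


Definition upd n (rho : restriction n) (i : 'I_n) (o : option bool) : restriction n :=
  [ffun j => if j == i then o else rho j].
Definition ext n (rho : restriction n) : cube n :=
  [ffun i => if rho i is Some b then b else false].

Lemma ext_extends n (rho : restriction n) : extends rho (ext rho).
Proof. by apply/forallP => i; rewrite ffunE; case: (rho i). Qed.

Lemma extends_upd n (rho : restriction n) i b x :
  rho i = None -> extends (upd rho i (Some b)) x -> extends rho x && (x i == b).
Proof.
move=> Hi /forallP H; apply/andP; split; last by have := H i; rewrite ffunE eqxx.
apply/forallP => j; have := H j; rewrite ffunE.
by case: eqVneq => [->|//]; rewrite Hi.
Qed.

Lemma Rp_upd (R : numFieldType) (p : R) n (rho : restriction n) i b :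
  p != 0 -> rho i = None ->
  Rp p (upd rho i (Some b)) = Rp p rho * ((1 - p) / (2 * p)).
Proof.
move=> p0 Hi; rewrite /Rp (bigD1 i) // [in RHS](bigD1 i) //= ffunE eqxx Hi.
rewrite (eq_bigr (fun j => if rho j is Some _ then (1 - p) / 2 else p)); last first.
  by move=> j /negPf ji; rewrite ffunE ji.
set P := \prod_(j | _) _.
have two0 : (2 : R) * p != 0 -> True by [].
rewrite mulrC [p * P]mulrC -mulrA; congr (_ * _).
by field.
Qed.

Lemma Rp_ge0 (R : realFieldType) (p : R) n (rho : restriction n) :
  0 < p < 1 -> 0 <= Rp p rho.
Proof.
case/andP => p0 p1; apply: prodr_ge0 => i _; case: (rho i) => [_|]; last exact: ltW.
by apply: divr_ge0; rewrite ?subr_ge0 ?ltW.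
Qed.

Definition rel n (f : cube n -> bool) (a rho : restriction n) : bool :=
  [exists i, [exists b, (rho i == None) && (a == upd rho i (Some b))
     && evB f (upd rho i (Some (~~ b)))]].

Lemma fiber n (f : cube n -> bool) (a : restriction n) :
  evA f a -> (#|[set rho | rel f a rho]| <= s0 f)%N.
Proof.
move=> hA.
have fx0 : f (ext a) = false.
  by apply: negbTE; move/forallP: hA => /(_ (ext a)); rewrite ext_extends.
apply: leq_trans (sens_s0 (f := f) (x := ext a) _); last by rewrite fx0.
apply: leq_trans (leq_imset_card (fun i => upd a i None) _).
apply: subset_leq_card; apply/fintype.subsetP => rho; rewrite inE.
case/existsP => i /existsP [b /andP [/andP [/eqP Hi /eqP Ea] hB]].
apply/imsetP; exists i.
  rewrite inE fx0; move/forallP: hB => /(_ (flip (ext a) i)) /implyP -> //.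
  apply/forallP => j; rewrite !ffunE; case: eqVneq => [->|ji].
    by rewrite Ea ffunE eqxx.
  rewrite Ea ffunE (negPf ji); by case: (rho j).
apply/ffunP => j; rewrite !ffunE; case: eqVneq => [->|ji]; first by rewrite Hi.
by rewrite Ea ffunE (negPf ji).
Qed.

Section Key.
Variables (R : realFieldType) (n : nat) (f : cube n -> bool) (p : R) (D : {set restriction n}).
Hypothesis hp : 0 < p < 1.
Hypothesis hD : is_filter D.
Let q := (1 - p) / (2 * p).

Lemma step1 rho : rho \in D -> evC f rho ->
  q * Rp p rho <= \sum_(a in D | evA f a) (if rel f a rho then Rp p a else 0).
Proof.
have p0 : p != 0 by case/andP: hp => h _; rewrite gt_eqF.
move=> rD /existsP [i /andP [/eqP Hi H]].
suff gen : forall b, evA f (upd rho i (Some b)) -> evB f (upd rho i (Some (~~ b))) ->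
  q * Rp p rho <= \sum_(a in D | evA f a) (if rel f a rho then Rp p a else 0).
  case/orP: H => /forallP H.
    apply: (gen false); apply/forallP => x; apply/implyP => /(extends_upd Hi) /andP [ex /eqP xi];
    by have := H x; rewrite ex xi /= => /eqP ->.
  apply: (gen true); apply/forallP => x; apply/implyP => /(extends_upd Hi) /andP [ex /eqP xi];
  by have := H x; rewrite ex xi /= => /eqP ->.
move=> b hA hB.
have aD : upd rho i (Some b) \in D by exact: hD.
rewrite (bigD1 (upd rho i (Some b))) /=; last by rewrite aD hA.
have -> : rel f (upd rho i (Some b)) rho.
  by apply/existsP; exists i; apply/existsP; exists b; rewrite Hi !eqxx hB.
rewrite Rp_upd // mulrC lerDl; apply: sumr_ge0 => a _; case: ifP => // _.
exact: Rp_ge0.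
Qed.

Lemma key : q * (\sum_(rho in D | evC f rho) Rp p rho)
    <= (s0 f)%:R * (\sum_(rho in D | evA f rho) Rp p rho).
Proof.
rewrite mulr_sumr.
apply: le_trans (_ : \sum_(rho in D | evC f rho) \sum_(a in D | evA f a)
     (if rel f a rho then Rp p a else 0) <= _).
  by apply: ler_sum => rho /andP [rD hC]; apply: step1.
rewrite exchange_big /= mulr_sumr; apply: ler_sum => a /andP [aD hA].
apply: le_trans (_ : \sum_rho (if rel f a rho then Rp p a else 0) <= _).
  rewrite [X in X <= _]big_mkcond /=; apply: ler_sum => rho _.
  by case: ifP => // _; case: ifP => //; rewrite Rp_ge0.
have -> : \sum_rho (if rel f a rho then Rp p a else 0) =
          \sum_(rho in [set rho | rel f a rho]) Rp p a.
  by rewrite [RHS]big_mkcond; apply: eq_bigr => rho _; rewrite inE.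
rewrite sumr_const -(mulr_natl (Rp p a)); apply: ler_wpM2r; first exact: Rp_ge0.
by rewrite ler_nat; apply: fiber.
Qed.
End Key.

Lemma sens_neg n (f : cube n -> bool) x : sens (fun x => ~~ f x) x = sens f x.
Proof. by apply: eq_card => i; rewrite !inE; case: (f x); case: (f (flip x i)). Qed.

Lemma s0_neg n (f : cube n -> bool) : s0 (fun x => ~~ f x) = s1 f.
Proof. by apply: eq_big => [x|x _]; rewrite ?negbK ?sens_neg. Qed.

Lemma evC_neg n (f : cube n -> bool) : evC (fun x => ~~ f x) =1 evC f.
Proof.
move=> rho; rewrite /evC; apply: eq_existsb => i; rewrite [X in _ && X]orbC.
congr (_ && (_ || _)); apply: eq_forallb => x;
by case: (f x); case: (x i); case: extends.
Qed.

Lemma evA_neg n (f : cube n -> bool) : evA (fun x => ~~ f x) =1 evB f.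
Proof. by move=> rho; rewrite /evA /evB; apply: eq_forallb => x; rewrite negbK. Qed.

Theorem mainTheorem11 (R : realType) (n : nat) (f : cube n -> bool) :
  [/\ (* (i) Khrapchenko *)
      (forall A B : {set cube n}, A != set0 -> B != set0 ->
         {in A, forall x, f x = false} -> {in B, forall y, f y = true} ->
         (#|khr_C A B|%:R ^+ 2 / (#|A|%:R * #|B|%:R) : R) <= (s0 f * s1 f)%:R),
      (* (ii) Koutsoupias *)
      (forall A B : {set cube n}, A != set0 -> B != set0 ->
         {in A, forall x, f x = false} -> {in B, forall y, f y = true} ->
         spectral_norm (koutsoupias_Q R A B) ^+ 2 <= (s0 f * s1 f)%:R),
      (* (iii) Hastad *)
      (forall (p : R) (D : {set restriction n}), 0 < p < 1 -> is_filter D ->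
         0 < condPr p (evA f) D -> 0 < condPr p (evB f) D ->
         condPr p (evC f) D ^+ 2 / (condPr p (evA f) D * condPr p (evB f) D)
           * ((1 - p) / (2 * p)) ^+ 2 <= (s0 f * s1 f)%:R)
    & (s0 f * s1 f <= sensitivity f ^ 2)%N].
Proof.
split.
- move=> A B nA nB HA HB.
  have a0 : 0 < (#|A|%:R : R) by rewrite ltr0n card_gt0.
  have b0 : 0 < (#|B|%:R : R) by rewrite ltr0n card_gt0.
  rewrite ler_pdivrMr ?mulr_gt0 //.
  have h1 := khr_bound1 R HA HB; have h2 := khr_bound2 R HA HB.
  have := ler_pM (ler0n _ _) (ler0n _ _) h1 h2.
  by rewrite -expr2 natrM => H; apply: (le_trans H); rewrite mulrACA.
- by move=> A B _ _ HA HB; apply: spec_bound.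
- move=> p D hp hD; rewrite /condPr.
  set Z := \sum_(rho in D) Rp p rho.
  set SA := \sum_(rho in D | evA f rho) Rp p rho.
  set SB := \sum_(rho in D | evB f rho) Rp p rho.
  set SC := \sum_(rho in D | evC f rho) Rp p rho.
  move=> hA hB.
  have Z0 : 0 <= Z by apply: sumr_ge0 => rho _; apply: Rp_ge0.
  have Zn0 : Z != 0 by apply/eqP => Ze; move: hA; rewrite Ze invr0 mulr0 ltxx.
  have Zp : 0 < Z by rewrite lt_def Zn0.
  have SAp : 0 < SA by move: hA; rewrite pmulr_lgt0 // invr_gt0.
  have SBp : 0 < SB by move: hB; rewrite pmulr_lgt0 // invr_gt0.
  have SC0 : 0 <= SC by apply: sumr_ge0 => rho _; apply: Rp_ge0.
  set q := (1 - p) / (2 * p).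
  have q0 : 0 <= q.
    case/andP: hp => p0 p1; apply: divr_ge0; first by rewrite subr_ge0 ltW.
    by rewrite mulr_ge0 // ltW.
  have k1 : q * SC <= (s0 f)%:R * SA by apply: key.
  have k2 : q * SC <= (s1 f)%:R * SB.
    have := @key R n (fun x => ~~ f x) p D hp hD; rewrite s0_neg.
    have -> : \sum_(rho in D | evC (fun x => ~~ f x) rho) Rp p rho = SC.
      by apply: eq_bigl => rho; rewrite evC_neg.
    have -> : \sum_(rho in D | evA (fun x => ~~ f x) rho) Rp p rho = SB.
      by apply: eq_bigl => rho; rewrite evA_neg.
    by [].
  have -> : (SC / Z) ^+ 2 / (SA / Z * (SB / Z)) * q ^+ 2 = (q * SC) ^+ 2 / (SA * SB).
    by field; rewrite Zn0 gt_eqF // gt_eqF.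
  rewrite ler_pdivrMr ?mulr_gt0 //.
  have := ler_pM (mulr_ge0 q0 SC0) (mulr_ge0 q0 SC0) k1 k2.
  by rewrite -expr2 natrM => H; apply: (le_trans H); rewrite mulrACA.
- by rewrite /sensitivity -mulnn; apply: leq_mul; [apply: leq_maxl | apply: leq_maxr].
Qed.
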